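(* Let $a, b, n$ be positive integers with $b>1$, $n>1$ and $\gcd(r_b(n),a)=1$, and write $S = S_a(b,n)$. Then the set of maximal elements of $\operatorname{Ap}(S)$ with respect to the partial order $\preceq_S$ is exactly \[\Big\{ a_i + (b-1)\sum_{j=i}^n a_j \;\Big|\; i = 2,\ldots,n\Big\}.\]
   Context: For $\ell \ge 1$, $r_b(\ell) = \sum_{j=0}^{\ell-1} b^j$, and $r_b(0)=0$. For $i \ge 1$, $a_i := r_b(n) + a\, r_b(i-1)$; $S_a(b,n)$ is the numerical semigroup generated by $\{a_i\}$, with multiplicity $a_1$. $\operatorname{Ap}(S) = \{\omega\in S : \omega - a_1 \notin S\}$. For a numerical semigroup $S$, $\preceq_S$ is the partial order on $\mathbb{Z}$ given by $y \preceq_S x$ iff $x - y \in S$. *)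

(* Defs.v *)
From mathcomp Require Import all_boot.
Set Implicit Arguments. Unset Strict Implicit. Unset Printing Implicit Defensive.

Definition rb (b l : nat) : nat := \sum_(j < l) b ^ j.

(* a_i = r_b(n) + a * r_b(i-1), meaningful for i >= 1 *)
Definition gen (a b n i : nat) : nat := rb b n + a * rb b i.-1.

Inductive inS (a b n : nat) : nat -> Prop :=
| inS0 : inS a b n 0
| inS_add (i x : nat) : 0 < i -> inS a b n x -> inS a b n (gen a b n i + x).

(* Apery set w.r.t. the multiplicity a_1:  w in S and w - a_1 not in S
   (w - a_1 is taken in Z: if w < a_1 it is negative, hence not in S) *)
Definition Ap (a b n w : nat) : Prop :=
  inS a b n w /\ ~ (gen a b n 1 <= w /\ inS a b n (w - gen a b n 1)).

Definition leS (a b n y x : nat) : Prop :=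
  exists s, inS a b n s /\ x = y + s.

Definition maxAp (a b n w : nat) : Prop :=
  Ap a b n w /\ forall w', Ap a b n w' -> leS a b n w w' -> w' = w.

(* Main.v *)
Require Import Defs.
From mathcomp Require Import all_boot zify.
Set Implicit Arguments. Unset Strict Implicit. Unset Printing Implicit Defensive.

Fixpoint dsf (b f x : nat) : nat :=
  if f is f'.+1 then x %% b + dsf b f' (x %/ b) else 0.
Definition ds b x := dsf b x x.

Section DS.
Variable b : nat.
Hypothesis hb : 1 < b.

Lemma dsf0 f : dsf b f 0 = 0.
Proof. by elim: f => //= f IH; rewrite mod0n div0n IH. Qed.

Lemma dsf_stable f1 f2 x : x <= f1 -> x <= f2 -> dsf b f1 x = dsf b f2 x.
Proof.
elim: f1 f2 x => [|f1 IH] [|f2] x /= h1 h2.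
- by [].
- have -> : x = 0 by lia. by rewrite ?mod0n ?div0n dsf0.
- have -> : x = 0 by lia. by rewrite ?mod0n ?div0n dsf0.
- congr (_ + _); apply: IH.
  + case: x h1 {h2} => [|x] h1; first by rewrite div0n.
    have := ltn_Pdiv hb (isT : 0 < x.+1); lia.
  + case: x h2 {h1} => [|x] h2; first by rewrite div0n.
    have := ltn_Pdiv hb (isT : 0 < x.+1); lia.
Qed.

Lemma dsE x : ds b x = x %% b + ds b (x %/ b).
Proof.
case: x => [|x]; first by rewrite /ds /= mod0n div0n.
rewrite /ds /=; congr (_ + _); apply: dsf_stable => //.
have := ltn_Pdiv hb (isT : 0 < x.+1); lia.
Qed.

Lemma ds0 : ds b 0 = 0. Proof. by []. Qed.

Lemma dsrq r q : r < b -> ds b (r + b * q) = r + ds b q.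
Proof.
move=> hr; rewrite dsE.
have hb0 : 0 < b by lia.
rewrite mulnC divnDMl // divn_small // add0n; congr (_ + _); rewrite addnC modnMDl modn_small //.
Qed.

Lemma dsdec x : exists r q, [/\ r < b, x = r + b * q & (0 < x -> q < x)].
Proof.
exists (x %% b), (x %/ b); split.
- by rewrite ltn_mod; lia.
- by rewrite {1}(divn_eq x b); lia.
- move=> hx; exact: ltn_Pdiv.
Qed.

Lemma dsD1 x : ds b (x + 1) <= ds b x + 1.
Proof.
elim/ltn_ind: x => x IH.
have [r [q [hr ex hq]]] := dsdec x.
have IHq : q < x -> ds b (q + 1) <= ds b q + 1 by apply: IH.
rewrite {}ex in IHq *; clear IH.
case: (ltnP (r + 1) b) => h.
- rewrite -addnA (addnC (b*q)) addnA dsrq // dsrq //; lia.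
- have -> : r + b * q + 1 = 0 + b * (q + 1) by rewrite mulnDr; lia.
  rewrite dsrq; last lia. rewrite dsrq //.
  have hql : q < r + b * q by nia.
  have := IHq hql; lia.
Qed.

Lemma dsDn x m : ds b (x + m) <= ds b x + m.
Proof.
elim: m => [|m IH]; first by rewrite !addn0.
have := dsD1 (x + m); rewrite -addnA addn1 -addn1 addnA; lia.
Qed.

Lemma dsDpow e x : ds b (x + b ^ e) <= ds b x + 1.
Proof.
elim: e x => [|e IH] x; first by rewrite expn0 dsD1.
have [r [q [hr -> _]]] := dsdec x.
rewrite expnS -addnA -mulnDr !dsrq //; have := IH q; lia.
Qed.

Lemma dsMpow k q r : r < b ^ k -> ds b (q * b ^ k + r) = ds b q + ds b r.
Proof.
elim: k q r => [|k IH] q r.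
- rewrite expn0 muln1 => hr; have -> : r = 0 by lia.
  by rewrite addn0 ds0 addn0.
- move=> hr; have [r0 [r1 [hr0 er _]]] := dsdec r.
  have hr1 : r1 < b ^ k by rewrite er expnS in hr; nia.
  have -> : q * b ^ k.+1 + r = r0 + b * (q * b ^ k + r1) by rewrite er expnS; nia.
  rewrite dsrq // IH // er dsrq //; lia.
Qed.

Lemma dsCompl k y : y < b ^ k -> ds b (b ^ k - 1 - y) + ds b y = k * (b - 1).
Proof.
elim: k y => [|k IH] y.
- rewrite expn0 => hy; have -> : y = 0 by lia. by [].
- move=> hy; have [y0 [y1 [hy0 ey _]]] := dsdec y.
  have hy1 : y1 < b ^ k by rewrite ey expnS in hy; nia.
  have -> : b ^ k.+1 - 1 - y = (b - 1 - y0) + b * (b ^ k - 1 - y1).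
    rewrite ey expnS. have hp : 0 < b ^ k by rewrite expn_gt0; lia.
    rewrite !mulnBr muln1; nia.
  rewrite dsrq; last lia. rewrite ey dsrq //.
  have := IH y1 hy1; lia.
Qed.

End DS.

Lemma rbS b l : rb b l.+1 = 1 + b * rb b l.
Proof. by rewrite /rb big_ord_recl expn0 big_distrr; congr (_ + _); apply: eq_bigr => i _; rewrite expnS. Qed.

Lemma rbSr b l : rb b l.+1 = rb b l + b ^ l.
Proof. by rewrite /rb big_ord_recr. Qed.

Lemma rb_pow b l : 0 < b -> (b - 1) * rb b l + 1 = b ^ l.
Proof.
move=> hb; elim: l => [|l IH]; first by rewrite /rb big_ord0 muln0 expn0.
rewrite rbSr mulnDr expnS; nia.
Qed.

Lemma rb_add b n m : rb b (n + m) = rb b n + b ^ n * rb b m.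
Proof.
elim: m => [|m IH]; first by rewrite addn0 /rb big_ord0 muln0 addn0.
by rewrite addnS !rbSr IH expnD; nia.
Qed.

Section Semi.
Variables a b n : nat.
Hypotheses (ha : 0 < a) (hb : 1 < b) (hn : 1 < n).
Local Notation N := (rb b n).
Local Notation g := (gen a b n).
Local Notation S := (inS a b n).
Definition InNS z := exists s, S s /\ z = N + s.

Lemma N_gt0 : 0 < N.
Proof. case: n hn => // n' _; rewrite rbS; lia. Qed.

Lemma g_gt0 i : 0 < g i.
Proof. rewrite /gen; have := N_gt0; lia. Qed.

Lemma inS_add x y : S x -> S y -> S (x + y).
Proof. elim=> [|i z hi hz IH] hy //; rewrite -addnA; constructor => //; exact: IH. Qed.

Lemma inS_g i : 0 < i -> S (g i).
Proof. by move=> hi; rewrite -[g i]addn0; constructor => //; constructor. Qed.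

Lemma inS_mul k x : S x -> S (k * x).
Proof. move=> hx; elim: k => [|k IH]; first by rewrite mul0n; constructor.
by rewrite mulSn; apply: inS_add. Qed.

Lemma g1 : g 1 = N.
Proof. by rewrite /gen /rb big_ord0 muln0 addn0. Qed.

Lemma InNS_add x y : InNS x -> S y -> InNS (x + y).
Proof. move=> [s [hs ->]] hy; exists (s + y); split; [exact: inS_add| lia]. Qed.

Lemma InNS_g1 y : S y -> InNS (g 1 + y).
Proof. by move=> hy; exists y; rewrite g1. Qed.

Lemma pow_N : b ^ n = (b - 1) * N + 1.
Proof. by rewrite rb_pow //; lia. Qed.

Lemma InNS_big j : n < j -> InNS (g j).
Proof.
move=> hj; have [m ->] : exists m, j = n + m.+1 by exists (j - n).-1; lia.
exists ((a - 1) * N + g m.+1 + (b - 1) * a * rb b m * N); split.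
- apply: inS_add; [apply: inS_add|].
  + by rewrite -g1; apply: inS_mul; apply: inS_g.
  + exact: inS_g.
  + by rewrite -g1; apply: inS_mul; apply: inS_g.
- rewrite /gen /= addnS /= rb_add pow_N. nia.
Qed.

Lemma g_swap i k : 0 < i -> 1 < k -> b * g i + g k = g i.+1 + b * g k.-1.
Proof.
move=> hi hk; rewrite /gen /=.
have -> : i = i.-1.+1 by lia.
have -> : k.-1 = k.-2.+1 by lia.
rewrite !rbS /=; nia.
Qed.


Lemma Glem k i : 0 < k -> 0 < i ->
  InNS (b * g i + g k + (b - 1) * \sum_(i.+1 <= l < n.+1) g l).
Proof.
elim: k i => [|k IH] i hk hi //.
case: (posnP k) => [->|hk0].
- have -> : b * g i + g 1 + (b - 1) * \sum_(i.+1 <= l < n.+1) g l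
     = g 1 + (b * g i + (b - 1) * \sum_(i.+1 <= l < n.+1) g l) by lia.
  apply: InNS_g1; apply: inS_add; apply: inS_mul; first exact: inS_g.
  by rewrite big_nat; elim: index_iota => [|x s IHs]; [rewrite big_nil; constructor|
     rewrite big_cons; case: ifP => hx //; apply: inS_add => //; apply: inS_g; case/andP: hx; lia].
- rewrite (g_swap hi (_ : 1 < k.+1)) /=; last lia.
  case: (leqP n i) => hni.
  + rewrite big_geq; last lia.
    rewrite muln0 addn0; apply: InNS_add; first by apply: InNS_big; lia.
    by apply: inS_mul; apply: inS_g.
  + rewrite big_ltn; last lia.
    set s := \sum_(i.+2 <= l < n.+1) g l.
    have := IH i.+1 hk0 (isT : 0 < i.+1); rewrite -/s => hI.
    have -> : g i.+1 + b * g k + (b - 1) * (g i.+1 + s)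
       = (b * g i.+1 + g k + (b - 1) * s) + (b - 1) * g k by nia.
    apply: InNS_add => //; apply: inS_mul; exact: inS_g.
Qed.


Lemma S_sum (r : seq nat) (F : nat -> nat) :
  (forall l, l \in r -> S (F l)) -> S (\sum_(l <- r) F l).
Proof.
elim: r => [|x r IH] h; first by rewrite big_nil; constructor.
rewrite big_cons; apply: inS_add; first by apply: h; rewrite inE eqxx.
by apply: IH => l hl; apply: h; rewrite inE hl orbT.
Qed.

Definition V (c : nat -> nat) := \sum_(1 <= l < n.+1) c l * g l.

Lemma V_S c : S (V c).
Proof.
apply: S_sum => l; rewrite mem_index_iota => hl.
apply: inS_mul; apply: inS_g; lia.
Qed.

Lemma V_add c d : V (fun l => c l + d l) = V c + V d.
Proof. by rewrite /V -big_split; apply: eq_bigr => l _; rewrite mulnDl. Qed.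

Lemma V_ext c d : (forall l, 0 < l <= n -> c l = d l) -> V c = V d.
Proof. move=> h; apply: eq_big_nat => l hl; rewrite h //; lia. Qed.

Lemma V_ind k i : 0 < i <= n -> V (fun l => k * (l == i)) = k * g i.
Proof.
move=> hi; rewrite /V (bigD1_seq i) /=; last exact: iota_uniq.
- rewrite eqxx muln1 big1_seq ?addn0 // => l /andP [hl _].
  by rewrite (negbTE hl) muln0 mul0n.
- rewrite mem_index_iota; lia.
Qed.

Lemma V_zero : V (fun _ => 0) = 0.
Proof. by rewrite /V big1. Qed.

Definition cmax p l := if l == p then b else if p < l then b - 1 else 0.

Lemma sum_cmax p (f : nat -> nat) : 0 < p <= n ->
  \sum_(1 <= l < n.+1) cmax p l * f l = b * f p + (b - 1) * \sum_(p.+1 <= l < n.+1) f l.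
Proof.
move=> hp; rewrite (big_cat_nat _ (n := p)); [|lia|lia].
rewrite big1_seq ?add0n; last first.
  move=> l /andP [_]; rewrite mem_index_iota => hl.
  rewrite /cmax; have -> : (l == p) = false by apply/eqP; lia.
  have -> : (p < l) = false by lia. by [].
have e : \sum_(p.+1 <= l < n.+1) cmax p l * f l = (b - 1) * \sum_(p.+1 <= l < n.+1) f l.
  rewrite big_distrr; apply: eq_big_nat => l hl; rewrite /cmax.
  have -> : (l == p) = false by apply/eqP; lia.
  by have -> : (p < l) = true by lia.
rewrite big_ltn; last lia.
by rewrite e /cmax eqxx.
Qed.

Lemma W_eq p : 0 < p <= n -> V (cmax p) = g p + (b - 1) * \sum_(p <= j < n.+1) g j.
Proof.
move=> hp; rewrite /V sum_cmax // (big_ltn (m := p)); last lia.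
have -> : b * g p = g p + (b - 1) * g p by nia.
by rewrite mulnDr addnA.
Qed.

Definition K (c : nat -> nat) := \sum_(1 <= l < n.+1) c l.
Definition M (c : nat -> nat) := \sum_(1 <= l < n.+1) c l * rb b l.-1.

Lemma V_KM c : V c = K c * N + a * M c.
Proof.
rewrite /V /K /M big_distrl big_distrr -big_split /=.
by apply: eq_bigr => l _; rewrite /gen; nia.
Qed.

Lemma KM_pow c : (b - 1) * M c + K c = \sum_(1 <= l < n.+1) c l * b ^ l.-1.
Proof.
rewrite /M /K big_distrr -big_split /=; apply: eq_bigr => l _.
rewrite -(rb_pow l.-1 (_ : 0 < b)); last lia. nia.
Qed.

Lemma tel p m : p <= m -> b ^ p + (b - 1) * \sum_(p.+1 <= l < m.+1) b ^ l.-1 = b ^ m.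
Proof.
elim: m => [|m IH] hp.
- have -> : p = 0 by lia. by rewrite big_geq ?muln0 ?addn0.
- case: (ltnP m p) => hmp.
  + have -> : p = m.+1 by lia. by rewrite big_geq ?muln0 ?addn0.
  + rewrite big_nat_recr /=; last lia.
    have := IH hmp; rewrite expnS; nia.
Qed.

Lemma K_cmax p : 0 < p <= n -> K (cmax p) = b + (b - 1) * (n - p).
Proof.
move=> hp; rewrite /K.
have -> : \sum_(1 <= l < n.+1) cmax p l = \sum_(1 <= l < n.+1) cmax p l * 1
  by apply: eq_bigr => l _; rewrite muln1.
rewrite sum_cmax // sum_nat_const_nat; lia.
Qed.

Lemma P_cmax p : 0 < p <= n -> (b - 1) * M (cmax p) + K (cmax p) = b ^ n.
Proof.
move=> hp; rewrite KM_pow sum_cmax // -(tel (_ : p <= n)); last lia.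
have -> : p = p.-1.+1 by lia. by rewrite /= expnS.
Qed.


Definition adm (c : nat -> nat) := c 1 = 0 /\ ((forall l, c l <= b - 1) \/
  exists p, [/\ 1 < p <= n, c p = b, (forall l, 0 < l < p -> c l = 0) &
                (forall l, p < l -> c l <= b - 1)]).

Lemma case_adm c j : adm c -> 1 < j <= n ->
  adm (fun l => c l + (l == j)) \/
  exists i k, [/\ j <= i <= n, 1 < k <= i, b + (k == i) <= c i + (i == j) &
                  0 < c k + (k == j)].
Proof.
move=> [hc1 hc] hj.
have hj1 : (1 == j) = false by apply/eqP; lia.
case: hc => [h0|[p [hp hcp hlt hgt]]].
- case: (leqP (c j + 1) (b - 1)) => hcj.
  + left; split; first by rewrite hj1 hc1.
    left => l; case: eqP => [->|_]; [lia|]; have := h0 l; lia.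
  + have cj : c j = b - 1 by have := h0 j; lia.
    case: (boolP (has (fun l => 0 < c l) (index_iota 2 j))).
    * move/hasP => [k]; rewrite mem_index_iota => hk hck.
      right; exists j, k; rewrite eqxx.
      have -> : (k == j) = false by apply/eqP; lia.
      split; lia.
    * move/hasPn => hno; left; split; first by rewrite hj1 hc1.
      right; exists j; split => //; first by rewrite eqxx; lia.
      -- move=> l hl; have -> : (l == j) = false by apply/eqP; lia.
         case: (ltnP 1 l) => hl1.
         ++ have h2 : 2 <= l < j by lia.
            have := hno l; rewrite mem_index_iota h2 => /(_ isT); rewrite -leqNgt; lia.
         ++ have -> : l = 1 by lia. by rewrite hc1.
      -- move=> l hl; have -> : (l == j) = false by apply/eqP; lia.
         have := h0 l; lia.
- case: (ltngtP j p) => hjp.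
  + right; exists p, j; rewrite eqxx.
    have -> : (p == j) = false by apply/eqP; lia.
    split; lia.
  + case: (leqP (c j + 1) (b - 1)) => hcj.
    * left; split; first by rewrite hj1 hc1.
      right; exists p; split => //.
      -- have -> : (p == j) = false by apply/eqP; lia. lia.
      -- move=> l hl; have -> : (l == j) = false by apply/eqP; lia.
         rewrite hlt //; lia.
      -- move=> l hl; case: eqP => [->|_]; [lia|]; have := hgt l hl; lia.
    * have cj : c j = b - 1 by have := hgt j hjp; lia.
      right; exists j, p; rewrite eqxx.
      have -> : (p == j) = false by apply/eqP; lia.
      split; lia.
  + subst p; right; exists j, j; rewrite eqxx; split; lia.
Qed.


Lemma RW d i k : 1 < k <= i -> i <= n -> b + (k == i) <= d i -> 0 < d k ->
  V d = g i.+1 + (b * g k.-1 + V (fun l => d l - b * (l == i) - (l == k))).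
Proof.
move=> hk hi hdi hdk.
rewrite (V_ext (d := fun l => (d l - b * (l == i) - (l == k)) + (b * (l == i) + 1 * (l == k)))); last first.
  move=> l _; case hli : (l == i); case hlk : (l == k) => /=.
  - move/eqP: hli => eli; move/eqP: hlk => elk; subst; move: hdi; rewrite eqxx; lia.
  - move/eqP: hli => eli; subst; move: hdi; rewrite eq_sym hlk; lia.
  - move/eqP: hlk => elk; subst; lia.
  - lia.
rewrite V_add V_add V_ind ?V_ind; [|lia|lia].
rewrite mul1n -addnA (g_swap (_ : 0 < i) (_ : 1 < k)). all: try lia. rewrite [gen a b n i.+1]/gen /=; lia.
Qed.

Definition Q z := InNS z \/ exists c, adm c /\ z = V c.

Lemma Lstep m : forall j c, n.+1 - j <= m -> 0 < j -> adm c ->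
  (forall z, z < g j + V c -> S z -> Q z) -> Q (g j + V c).
Proof.
elim: m => [|m IH] j c hm hj hc hlt.
- left; apply: InNS_add; [apply: InNS_big; lia| exact: V_S].
- case: (eqVneq j 1) => [->|hj1]; first by left; apply: InNS_g1; exact: V_S.
  case: (leqP j n) => hjn; last by left; apply: InNS_add; [apply: InNS_big; lia| exact: V_S].
  have ed : g j + V c = V (fun l => c l + (l == j)).
    have e1 : V (fun l => c l + 1 * (l == j)) = V (fun l => c l + (l == j))
      by apply: V_ext => l _; rewrite mul1n.
    rewrite -e1 (V_add c (fun l => 1 * (l == j))) (V_ind 1 (_ : 0 < j <= n)); last lia.
    by rewrite mul1n addnC.
  case: (case_adm hc (_ : 1 < j <= n)); [lia| |].
  + by move=> hd; right; exists (fun l => c l + (l == j)).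
  + move=> [i [k [hi hk hdi hdk]]].
    have hin : i <= n by lia.
    have e := RW (d := fun l => c l + (l == j)) hk hin hdi hdk; rewrite -ed in e.
    set y := (b * g k.-1 + _) in e.
    have hy : S y by apply: inS_add; [apply: inS_mul; apply: inS_g; lia| exact: V_S].
    have hyl : y < g j + V c by rewrite e; have := g_gt0 i.+1; lia.
    case: (hlt y hyl hy) => [hN|[c2 [hc2 ey]]].
    * left; rewrite e addnC; apply: InNS_add => //; exact: inS_g.
    * rewrite e ey; apply: IH => //; first lia.
      by move=> z; rewrite -ey -e; apply: hlt.
Qed.

Lemma normal z : S z -> Q z.
Proof.
elim/ltn_ind: z => z IH hz.
case: hz IH => [|i x hi hx] IH.
- right; exists (fun _ => 0); split; last by rewrite V_zero.
  by split => //; left.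
- have hxz : x < g i + x by have := g_gt0 i; lia.
  case: (IH x hxz hx) => [hN|[c [hc ex]]].
  + left; rewrite addnC; apply: InNS_add => //; exact: inS_g.
  + rewrite ex; apply: (Lstep (m := n.+1 - i)) => //.
    by move=> y; rewrite -ex => hy; apply: IH.
Qed.


Lemma below c : adm c -> exists2 p, 1 < p <= n & exists2 s, S s & V (cmax p) = V c + s.
Proof.
move=> [hc1 hc].
have key p : 1 < p <= n -> (forall l, 0 < l <= n -> c l <= cmax p l) ->
    exists2 s, S s & V (cmax p) = V c + s.
  move=> hp hle; exists (V (fun l => cmax p l - c l)); first exact: V_S.
  rewrite -(V_add c (fun l => cmax p l - c l)); apply: V_ext => l hl.
  have := hle l hl; lia.
case: hc => [h0|[p [hp hcp hlt hgt]]].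
- exists 2; first lia. apply: key; first lia.
  move=> l hl; rewrite /cmax; case: eqP => [_|ne]; first by have := h0 l; lia.
  case: ifP => h; first exact: h0.
  have -> : l = 1 by lia. by rewrite hc1.
- exists p => //; apply: key => // l hl; rewrite /cmax; case: eqP => [->|ne]; first by rewrite hcp.
  case: ifP => h; first exact: hgt.
  rewrite hlt //; lia.
Qed.

Lemma Rinv s : S s -> exists D Mm X, [/\ s = D * N + a * Mm, (b - 1) * Mm + D = X & ds b X <= D].
Proof.
elim=> [|i x hi hx [D [Mm [X [e1 e2 e3]]]]].
- by exists 0, 0, 0; split; rewrite ?muln0 ?mul0n.
- exists D.+1, (Mm + rb b i.-1), (X + b ^ i.-1); split.
  + rewrite e1 /gen; nia.
  + rewrite -(rb_pow i.-1 (_ : 0 < b)); last lia. rewrite -e2; nia.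
  + have := dsDpow hb i.-1 X; lia.
Qed.

Lemma bnd m : 2 * (b - 1) * m < b ^ m.+1.
Proof.
elim: m => [|m IH]; first by rewrite muln0 expn1; lia.
have h2 : b <= b ^ m.+1 by rewrite -{1}(expn1 b) leq_pexp2l; lia.
rewrite expnS; nia.
Qed.

Hypothesis hco : coprime N a.

Lemma notNS p : 1 < p <= n -> ~ InNS (V (cmax p)).
Proof.
move=> hp [s [hs ew]].
have [D [Mm [X [es eX hX]]]] := Rinv hs.
have hK := K_cmax (_ : 0 < p <= n); have hP := P_cmax (_ : 0 < p <= n).
rewrite V_KM in ew.
set Kp := K (cmax p) in ew hK hP; set Mp := M (cmax p) in ew hK hP.
have hKp := hK (ltac:(lia)); have hPp := hP (ltac:(lia)); clear hK hP.
have hN := N_gt0.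
have pN := pow_N.
have hMp : Mp < N.
  have : (b - 1) * Mp < (b - 1) * N by nia.
  rewrite ltn_pmul2l //; lia.
case: (ltnP Mm Mp) => hMM.
- have e : a * (Mp - Mm) = (1 + D - Kp) * N by rewrite mulnBr mulnBl; nia.
  have : N %| a * (Mp - Mm) by rewrite e dvdn_mull.
  rewrite Gauss_dvdr // => /dvdn_leq; lia.
- have e : a * (Mm - Mp) = (Kp - 1 - D) * N by rewrite mulnBr mulnBl; nia.
  have : N %| a * (Mm - Mp) by rewrite e dvdn_mull.
  rewrite Gauss_dvdr // => /dvdnP [t et].
  have eK : Kp - 1 - D = a * t.
    apply/eqP; rewrite -(eqn_pmul2r hN) -e et; lia.
  have eM : Mm = Mp + t * N by lia.
  have hKD : 1 + D <= Kp.
    have hle := leq_mul (leqnn a) hMM.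
    have : (1 + D) * N <= Kp * N by rewrite es in ew; rewrite mulnDl mul1n; lia.
    by rewrite leq_pmul2r.
  have eKp : Kp = 1 + D + a * t by lia.
  have eX2 : X + (a * t + t) + 1 = t * b ^ n + b ^ n.
    rewrite -eX eM mulnDr.
    have -> : (b - 1) * (t * N) = t * ((b - 1) * N) by rewrite mulnA (mulnC (b - 1)) -mulnA.
    have -> : t * b ^ n = t * ((b - 1) * N) + t by rewrite pow_N mulnDr muln1.
    lia.
  have hnp : (b - 1) * (n - p).+1 <= (b - 1) * (n - 1) by apply: leq_mul; lia.
  rewrite mulnS in hnp.
  have hn1 : (b - 1) * (n - 1) < (b - 1) * n by rewrite ltn_pmul2l; lia.
  have hat : a * t <= (b - 1) * (n - 1) by lia.
  have ht : t <= a * t by apply: leq_pmull.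
  have hy : a * t + t < b ^ n.
    have := bnd n.-1; have -> : n.-1.+1 = n by lia.
    rewrite -mulnA subn1; lia.
  have eX3 : X = t * b ^ n + (b ^ n - 1 - (a * t + t)) by lia.
  have hr : b ^ n - 1 - (a * t + t) < b ^ n by lia.
  have d1 := dsMpow hb t hr.
  have d2 := dsCompl hb hy.
  have d3 := dsDn hb t (a * t); rewrite (addnC t) in d3.
  rewrite eX3 d1 in hX.
  rewrite addnC in d2.
  rewrite (mulnC n) in d2.
  lia.
Qed.

Lemma Ap_iff w : Ap a b n w <-> S w /\ ~ InNS w.
Proof.
rewrite /Ap g1; split => [[hw hn']|[hw hn']]; split => //.
- move=> [s [hs ews]]; apply: hn'; split; first lia.
  by rewrite ews addKn.
- move=> [hle hs]; apply: hn'; exists (w - N); split => //; lia.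
Qed.

Lemma main w : maxAp a b n w <->
    exists2 i, 2 <= i <= n & w = g i + (b - 1) * \sum_(i <= j < n.+1) g j.
Proof.
split.
- move=> [hAp hmax]; have [hw hnN] := (Ap_iff w).1 hAp.
  case: (normal hw) => [//|[c [hc ec]]].
  have [p hp [s hs es]] := below hc.
  exists p => //; rewrite -W_eq; last lia.
  symmetry; apply: hmax.
  + apply/Ap_iff; split; [exact: V_S| exact: notNS].
  + by exists s; rewrite ec.
- move=> [p hp ->]; rewrite -W_eq; last lia.
  have hApW : Ap a b n (V (cmax p)) by apply/Ap_iff; split; [exact: V_S| exact: notNS].
  split => // w' hw' [s [hs ew']].
  case: hs ew' => [|j x hj hx] ew'; first by rewrite ew' addn0.
  exfalso; have [_ hnN] := (Ap_iff w').1 hw'; apply: hnN.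
  rewrite ew' addnA; apply: InNS_add => //.
  rewrite /V sum_cmax; last lia.
  have -> : b * g p + (b - 1) * \sum_(p.+1 <= l < n.+1) g l + g j
    = b * g p + g j + (b - 1) * \sum_(p.+1 <= l < n.+1) g l by lia.
  apply: Glem => //; lia.
Qed.

End Semi.

Theorem proposition29 (a b n : nat) :
  0 < a -> 1 < b -> 1 < n -> coprime (rb b n) a ->
  forall w : nat,
    maxAp a b n w <->
    exists2 i, 2 <= i <= n &
      w = gen a b n i + (b - 1) * \sum_(i <= j < n.+1) gen a b n j.
Proof. move=> ha hb hn hco w; exact: (main ha hb hn hco w). Qed.
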